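(* Let $X$ be an $E\mathcal M$-simplicial set, $x\in X_n$, and $u_0,\dots,u_n\in\mathcal M$. Then for each $0\le k\le n$, $(u_0,\dots,u_n).x$ is $k$-supported on $\mathrm{im}(u_k)$. Moreover, if $x$ is $k$-supported on some co-infinite set $A$, then $(u_0,\dots,u_n).x$ is $k$-supported on $u_k(A)$.
   Context: $\omega=\{1,2,\dots\}$, $\mathcal M$ the monoid of injections $\omega\to\omega$, $\mathcal M_A$ the submonoid fixing $A\subset\omega$ elementwise; $A$ co-infinite if $\omega\setminus A$ is infinite. $E\mathcal M$ is the simplicial monoid with $(E\mathcal M)_n=\mathcal M^{1+n}$, pointwise multiplication, structure maps by precomposition; an $E\mathcal M$-simplicial set is a simplicial set with left $E\mathcal M$-action. $x\in X_n$ is $k$-supported on $A$ if $i_k(g).x=x$ for all $g\in\mathcal M_A$, where $i_k\colon\mathcal M\to\mathcal M^{1+n}$ is the inclusion of the $(1+k)$-th factor. *)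

(* Defs.v *)
From mathcomp Require Import all_boot.
Set Implicit Arguments. Unset Strict Implicit. Unset Printing Implicit Defensive.

(* omega = {1,2,...} is modelled by nat = {0,1,...} (a relabelling n |-> n+1). *)

Record inj : Type := Inj { fn :> nat -> nat; fn_inj : injective fn }.

Definition inj_one : inj := @Inj (fun a => a) (fun a b h => h).
Definition inj_mul (g h : inj) : inj :=
  @Inj (fun a => g (h a)) (inj_comp (@fn_inj g) (@fn_inj h)).

Definition fixes (A : nat -> Prop) (g : inj) : Prop := forall a, A a -> g a = a.
Definition coinfinite (A : nat -> Prop) : Prop := forall N, exists m, N <= m /\ ~ A m.
Definition im (u : inj) : nat -> Prop := fun a => exists b, u b = a.
Definition img (u : inj) (A : nat -> Prop) : nat -> Prop :=
  fun a => exists b, A b /\ u b = a.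

Definition EM (n : nat) := 'I_n.+1 -> inj.
Definition EM_one n : EM n := fun _ => inj_one.
Definition EM_mul n (g h : EM n) : EM n := fun i => inj_mul (g i) (h i).

(* Morphisms [m] -> [n] of the simplex category: monotone maps 'I_m.+1 -> 'I_n.+1. *)
Definition monotone m n (t : 'I_m.+1 -> 'I_n.+1) : Prop :=
  forall i j : 'I_m.+1, i <= j -> t i <= t j.

(* An E M-simplicial set: a simplicial set (presheaf on the simplex category,
   X_n indexed by nat, with structure maps X(t) : X_n -> X_m for monotone t)
   with a left action of the simplicial monoid E M, compatible with the
   structure maps (which act on E M by precomposition). *)
Record EMsSet : Type := {
  X :> nat -> Type;
  smap : forall m n (t : 'I_m.+1 -> 'I_n.+1), X n -> X m;
  smap_id : forall n (x : X n), smap (fun i => i) x = x;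
  smap_comp : forall m n p (t : 'I_m.+1 -> 'I_n.+1) (s : 'I_n.+1 -> 'I_p.+1)
      (x : X p), monotone t -> monotone s ->
      smap (fun i => s (t i)) x = smap t (smap s x);
  act : forall n, EM n -> X n -> X n;
  act_one : forall n (x : X n), act (@EM_one n) x = x;
  act_mul : forall n (g h : EM n) (x : X n), act (EM_mul g h) x = act g (act h x);
  act_smap : forall m n (t : 'I_m.+1 -> 'I_n.+1) (g : EM n) (x : X n),
      monotone t -> smap t (act g x) = act (fun i => g (t i)) (smap t x)
}.

Definition incl n (k : 'I_n.+1) (g : inj) : EM n :=
  fun i => if i == k then g else inj_one.

Definition supported (Xs : EMsSet) n (k : 'I_n.+1) (A : nat -> Prop) (x : Xs n) : Prop :=
  forall g : inj, fixes A g -> act (incl k g) x = x.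

(* Main.v *)
From Stdlib Require Import ClassicalEpsilon FunctionalExtensionality ProofIrrelevance.
Require Import Defs.
From mathcomp Require Import all_boot zify.
Set Implicit Arguments. Unset Strict Implicit.

Definition infp (P : nat -> Prop) := forall N, exists m, N <= m /\ P m.
Definition decP (P : nat -> Prop) (m : nat) : bool :=
  if excluded_middle_informative (P m) then true else false.
Lemma decPP P m : decP P m <-> P m.
Proof. rewrite /decP; case: excluded_middle_informative => //; split => //. Qed.

Section En.
Variable P : nat -> Prop.
Hypothesis HP : infp P.

Lemma nxt_ex m : exists q, (fun q => (m <= q) && decP P q) q.
Proof. case: (HP m) => q [h1 h2]; exists q; rewrite h1 /=; exact/decPP. Qed.
Definition nxt m := ex_minn (nxt_ex m).
Lemma nxt_spec m : [/\ m <= nxt m, P (nxt m) &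
   forall q, m <= q -> P q -> nxt m <= q].
Proof.
rewrite /nxt; case: ex_minnP => q /andP [h1 /decPP h2] h3; split => // r h4 h5.
apply: h3; rewrite h4 /=; exact/decPP.
Qed.
Fixpoint en i := match i with 0 => nxt 0 | j.+1 => nxt (en j).+1 end.
Lemma en_P i : P (en i).
Proof. case: i => [|i] /=; [by case: (nxt_spec 0) | by case: (nxt_spec (en i).+1)]. Qed.
Lemma en_lt i : en i < en i.+1.
Proof. by rewrite /=; case: (nxt_spec (en i).+1). Qed.
Lemma en_mono i j : i < j -> en i < en j.
Proof.
elim: j => // j IH; rewrite ltnS leq_eqVlt => /orP [/eqP -> | h]; first exact: en_lt.
exact: ltn_trans (IH h) (en_lt j).
Qed.
Lemma en_inj : injective en.
Proof.
move=> i j h; case: (ltngtP i j) => // hij.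
  by move: (en_mono hij); rewrite h ltnn.
by move: (en_mono hij); rewrite h ltnn.
Qed.
Lemma en_ge i : i <= en i.
Proof. elim: i => // i IH; exact: leq_ltn_trans IH (en_lt i). Qed.
Lemma en_surj p : P p -> exists i, en i = p.
Proof.
move=> Pp.
have h0 : en 0 <= p by case: (nxt_spec 0) => _ _ ->.
(* largest i <= p with en i <= p *)
have : forall j, j <= p -> en j <= p -> exists i, en i = p.
  move=> j; move: (erefl (p - j)); move: {2}(p - j) => d; elim: d j => [|d IH] j hd hj hej.
    have : j = p by lia.
    move=> ej; exists j; apply/eqP; rewrite eqn_leq hej /= -{1}ej; exact: en_ge.
  case: (ltngtP (en j) p) => hc; last by exists j.
    case: (leqP (en j.+1) p) => hc2.
      apply: (IH j.+1) => //; [lia | exact: leq_trans (en_ge _) hc2].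
    by move: hc2; rewrite /=; case: (nxt_spec (en j).+1) => _ _ /(_ p hc Pp) h; rewrite ltnNge h.
  by move: hc; rewrite ltnNge hej.
by move/(_ 0 (leq0n _) h0).
Qed.
End En.

Lemma inj_ext (f g : inj) : (forall a, f a = g a) -> f = g.
Proof.
case: f g => f fi [g gi] /= h.
have e : f = g by apply: functional_extensionality.
subst g; by rewrite (proof_irrelevance _ fi gi).
Qed.

Lemma unbounded (e : nat -> nat) : injective e -> forall N, exists i, N <= e i.
Proof.
move=> ei N; apply: NNPP => hn.
have hl : forall i, e i < N.
  move=> i; rewrite ltnNge; apply/negP => h; apply: hn; by exists i.
pose F (i : 'I_N.+1) : 'I_N := Ordinal (hl i).
have Fi : injective F.
  by move=> i j /(congr1 val) /= /ei /val_inj.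
by move: (leq_card _ Fi); rewrite !card_ord ltnn.
Qed.

Lemma factor (A : nat -> Prop) (f : inj) : coinfinite A ->
  exists g0 : inj, forall f' : inj, (forall a, A a -> f' a = f a) ->
    exists h : inj, fixes A h /\ forall m, f' m = g0 (h m).
Proof.
move=> cA.
pose D := fun m => ~ A m.
have iD : infp D by move=> N; case: (cA N) => m [h1 h2]; exists m.
pose V := fun m => ~ exists a, A a /\ f a = m.
have fDV : forall m, D m -> V (f m).
  by move=> m Dm [a [Aa /fn_inj e]]; apply: Dm; rewrite -e.
have iV : infp V.
  move=> N.
  have ei : injective (fun i => f (en iD i)).
    by move=> i j /fn_inj /en_inj.
  case: (unbounded ei N) => i hi; exists (f (en iD i)); split => //.
  apply: fDV; exact: en_P.
pose rk m := epsilon (inhabits 0) (fun i => en iD i = m).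
have rkP : forall m, D m -> en iD (rk m) = m.
  move=> m Dm; apply: (epsilon_spec (inhabits 0) (fun i => en iD i = m)); exact: en_surj.
pose g0f m := if excluded_middle_informative (A m) then f m else en iV (rk m).
have g0i : injective g0f.
  move=> m m'; rewrite /g0f.
  case: excluded_middle_informative => Am; case: excluded_middle_informative => Am'.
  - exact: fn_inj.
  - move=> e; exfalso; have := en_P iV (rk m'); apply; exists m; by split.
  - move=> e; exfalso; have := en_P iV (rk m); apply; exists m'; by split.
  - by move/en_inj => e; rewrite -(rkP m Am) -(rkP m' Am') e.
exists (Inj g0i) => f' hf'.
have g0A : forall a, A a -> g0f a = f a.
  by move=> a Aa; rewrite /g0f; case: excluded_middle_informative.
have surj : forall m, ~ A m -> exists d, g0f d = f' m.
  move=> m Am.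
  have Vm : V (f' m).
    move=> [a [Aa e]]; rewrite -hf' // in e; apply: Am; by rewrite -(fn_inj e).
  case: (en_surj iV Vm) => i ei.
  exists (en iD i); rewrite /g0f; case: excluded_middle_informative => h.
    by exfalso; apply: (en_P iD i).
  have -> : rk (en iD i) = i by apply: (@en_inj _ iD); apply: rkP; apply: en_P.
  by rewrite ei.
pose hf m := if excluded_middle_informative (A m) then m
             else epsilon (inhabits 0) (fun d => g0f d = f' m).
have hP : forall m, f' m = g0f (hf m).
  move=> m; rewrite /hf; case: excluded_middle_informative => Am.
    by rewrite g0A // hf'.
  by symmetry; apply: (epsilon_spec (inhabits 0) (fun d => g0f d = f' m)); apply: surj.
have hi : injective hf.
  by move=> m m' e; apply: (@fn_inj f'); rewrite !hP e.
exists (Inj hi); split => //.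
by move=> a Aa /=; rewrite /hf; case: excluded_middle_informative.
Qed.

Definition upd n (u : EM n) (k : 'I_n.+1) (p : inj) : EM n :=
  fun i => if i == k then p else u i.

Lemma upd_id n (u : EM n) k : upd u k (u k) = u.
Proof. by apply: functional_extensionality => i; rewrite /upd; case: eqP => // ->. Qed.

Lemma mul_incl n (u : EM n) k g : EM_mul (incl k g) u = upd u k (inj_mul g (u k)).
Proof.
apply: functional_extensionality => i; rewrite /EM_mul /incl /upd.
case: eqP => [->|_] //; exact: inj_ext.
Qed.

Theorem lemma2p5 (Xs : EMsSet) (n : nat) (x : Xs n) (u : EM n) :
  forall k : 'I_n.+1,
    supported k (im (u k)) (act u x) /\
    (forall A : nat -> Prop, coinfinite A -> supported k A x ->
       supported k (img (u k) A) (act u x)).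
Proof.
move=> k; split.
  move=> g hg; rewrite -act_mul mul_incl.
  have -> : inj_mul g (u k) = u k.
    apply: inj_ext => a /=; apply: hg; by exists a.
  by rewrite upd_id.
move=> A cA sx g hg; rewrite -act_mul mul_incl.
case: (factor (u k) cA) => g0 Hg0.
have key : forall f' : inj, (forall a, A a -> f' a = u k a) ->
    act (upd u k f') x = act (upd u k g0) x.
  move=> f' hf'; case: (Hg0 f' hf') => h [hA hh].
  have -> : upd u k f' = EM_mul (upd u k g0) (incl k h).
    apply: functional_extensionality => i; rewrite /EM_mul /incl /upd.
    by case: eqP => _; apply: inj_ext.
  by rewrite act_mul sx.
rewrite (key (inj_mul g (u k))); last by move=> a Aa /=; apply: hg; exists a.
by rewrite -(key (u k)) // upd_id.
Qed.
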